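(* For infinitely many $n$ there exist positive integers $b_1,\dots,b_n$ (each at most $n-1$) such that $(b_1,\dots,b_n)$-BG has an equilibrium graph in the MAX version with diameter $\sqrt{\log n}$.
   Context: Bounded budget network creation game $(b_1,\dots,b_n)$-BG: $n$ players with integer budgets $0\le b_i\le n-1$. A strategy of player $i$ is a set $S_i\subseteq\{1,\dots,n\}\setminus\{i\}$ with $|S_i|=b_i$; a profile is realized by the directed graph $G$ on $u_1,\dots,u_n$ with an arc $\overrightarrow{u_iu_j}$ iff $j\in S_i$. $U(G)$ is the undirected multigraph obtained by ignoring directions; $\operatorname{dist}(u,v)$ is the distance in $U(G)$, defined as $n^2$ between different components. MAX cost: $c_{MAX}(u)=\max_v\operatorname{dist}(u,v)+(\kappa-1)n^2$, $\kappa$ the number of components of $U(G)$. An equilibrium graph in the MAX version is a realization in which no vertex can decrease its MAX cost by changing its own strategy while the others are fixed. The diameter is the maximum distance between two vertices. Logarithms are base 2. *)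

(* Defs.v *)
From Stdlib Require Import Reals.
From mathcomp Require Import all_boot.

Set Implicit Arguments.
Unset Strict Implicit.
Unset Printing Implicit Defensive.

(* A strategy profile: player i buys arcs to the players in S i. *)
Definition profile (n : nat) := 'I_n -> {set 'I_n}.

Definition valid_strategy (n : nat) (b : 'I_n -> nat) (i : 'I_n) (A : {set 'I_n}) :=
  i \notin A /\ #|A| = b i.

Definition valid_profile (n : nat) (b : 'I_n -> nat) (S : profile n) :=
  forall i, valid_strategy b i (S i).

Definition adj (n : nat) (S : profile n) : rel 'I_n :=
  fun u v => (v \in S u) || (u \in S v).

Fixpoint ball (n : nat) (S : profile n) (k : nat) (u : 'I_n) : {set 'I_n} :=
  match k with
  | 0 => [set u]
  | k'.+1 => ball S k' u :|: [set v | [exists w in ball S k' u, adj S w v]]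
  end.

(* distance in U(G): least k with v within k steps (any finite distance is < n),
   and n^2 between different components *)
Definition dist (n : nat) (S : profile n) (u v : 'I_n) : nat :=
  \big[minn/n ^ 2]_(k < n | v \in ball S k u) k.

Definition ncomp (n : nat) (S : profile n) : nat :=
  #|[set [set v | connect (adj S) u v] | u : 'I_n]|.

Definition cMAX (n : nat) (S : profile n) (u : 'I_n) : nat :=
  \max_(v : 'I_n) dist S u v + (ncomp S - 1) * n ^ 2.

Definition max_equilibrium (n : nat) (b : 'I_n -> nat) (S : profile n) :=
  valid_profile b S /\
  forall (i : 'I_n) (S' : profile n),
    (forall j, j != i -> S' j = S j) ->
    valid_strategy b i (S' i) ->
    cMAX S i <= cMAX S' i.

Definition diameter (n : nat) (S : profile n) : nat :=
  \max_(u : 'I_n) \max_(v : 'I_n) dist S u v.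

Definition log2 (x : R) : R := Rdiv (ln x) (ln (IZR 2)).

(* Main.v *)
Require Import Defs.
From Stdlib Require Import Reals Lra.
From mathcomp Require Import all_boot.
From mathcomp Require Import zify.
Set Implicit Arguments.
Unset Strict Implicit.
Unset Printing Implicit Defensive.

Definition DBS (n k : nat) (x : 'I_n) : {set 'I_n} :=
  [set y : 'I_n | [exists a : 'I_k, val y == (x * k + a) %% n] && (y != x)].

Lemma modE (n k x c : nat) : ((x %% n) * k + c) %% n = (x * k + c) %% n.
Proof. by rewrite -modnDml modnMml modnDml. Qed.

Section DB.
Variables (k d n : nat).
Hypothesis Hn : n = k ^ d.
Hypothesis Hk : 1 < k.
Hypothesis Hd : 0 < d.

Lemma n_gt0 : 0 < n.
Proof. by rewrite Hn expn_gt0 (ltnW Hk). Qed.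

Lemma n_gt1 : 1 < n.
Proof. by rewrite Hn; case: d Hd => // d' _; rewrite expnS; nia. Qed.

Lemma DBS_notin (x : 'I_n) : x \notin DBS k x.
Proof. by rewrite inE eqxx andbF. Qed.

Lemma DBS_card_le (x : 'I_n) : #|DBS k x| <= k.
Proof.
pose g (a : 'I_k) : 'I_n := Ordinal (ltn_pmod (x * k + a) n_gt0).
apply: (@leq_trans #|[set g a | a in 'I_k]|); last by rewrite (leq_trans (leq_imset_card _ _)) // card_ord.
apply: subset_leq_card; apply/subsetP => y; rewrite inE => /andP [/existsP [a /eqP Ha] _].
apply/imsetP; exists a => //; by apply: val_inj.
Qed.

Lemma DBS_card_gt0 (x : 'I_n) : 0 < #|DBS k x|.
Proof.
have k1 : 1 < k := Hk.
pose y0 : 'I_n := Ordinal (ltn_pmod (x * k + 0) n_gt0).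
pose y1 : 'I_n := Ordinal (ltn_pmod (x * k + 1) n_gt0).
have ne : y0 != y1.
  apply/negP => /eqP /(congr1 val) /= /eqP; rewrite eqn_modDl => /eqP.
  by rewrite mod0n modn_small ?n_gt1.
have a0 : 0 < k by apply: ltnW.
have [e0|e0] := eqVneq y0 x.
- apply/card_gt0P; exists y1; rewrite inE; apply/andP; split.
    by apply/existsP; exists (Ordinal k1).
  by rewrite -e0 eq_sym.
- apply/card_gt0P; exists y0; rewrite inE e0 andbT.
  by apply/existsP; exists (Ordinal a0).
Qed.

Let K := k ^ d.-1.
Lemma nKk : n = K * k.
Proof. by rewrite Hn /K -expnSr prednK. Qed.

Lemma K_gt0 : 0 < K.
Proof. by rewrite expn_gt0 (ltnW Hk). Qed.

Lemma shift_mod v (a : nat) : a < k -> (v * k + a) %% n = (v %% K) * k + a.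
Proof.
move=> ak. rewrite nKk {1}(divn_eq v K) mulnDl -mulnA -addnA modnMDl modn_small //.
have := ltn_pmod v K_gt0; nia.
Qed.

Lemma in_DBS_div (w v : 'I_n) : w \in DBS k v -> val w %/ k = v %% K.
Proof.
rewrite inE => /andP [/existsP [a /eqP ->] _].
by rewrite shift_mod // divnMDl ?divn_small ?addn0 // (ltnW Hk).
Qed.

Lemma indeg_le (w : 'I_n) : #|[set v | w \in DBS k v]| <= k.
Proof.
have divlt : forall v : 'I_n, v %/ K < k.
  by move=> v; rewrite ltn_divLR ?K_gt0 // mulnC -nKk.
pose f (v : 'I_n) : 'I_k := Ordinal (divlt v).
rewrite -(card_in_imset (f := f)); first by rewrite (leq_trans (max_card _)) ?card_ord.
move=> v1 v2; rewrite in_set => H1; rewrite in_set => H2 /(congr1 val) /= E.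
have {}H1 := in_DBS_div H1; have {}H2 := in_DBS_div H2.
apply: val_inj => /=; by rewrite (divn_eq v1 K) (divn_eq v2 K) E -H1 -H2.
Qed.


Lemma ball_card (S' : profile n) (i : 'I_n) :
  (forall v, v != i -> S' v = DBS k v) -> #|S' i| <= k ->
  forall r u, #|ball S' r u| <= (2*k+2)^r.
Proof.
move=> HS Hi.
have deg w : #|[set v | adj S' w v]| <= 2*k+1.
  have out : #|S' w| <= k.
    by case: (eqVneq w i) => [->|/HS ->] //; apply: DBS_card_le.
  have inn : #|[set v | w \in S' v]| <= k.+1.
    apply: (@leq_trans #|i |: [set v | w \in DBS k v]|).
      apply: subset_leq_card; apply/subsetP => v; rewrite in_set => H.
      rewrite in_setU1; case: (eqVneq v i) => //= /HS E.
      by rewrite in_set -E.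
    by rewrite cardsU1 -addn1 addnC leq_add ?leq_b1 ?indeg_le.
  have -> : [set v | adj S' w v] = S' w :|: [set v | w \in S' v].
    by apply/setP => v; rewrite in_set /adj in_setU in_set.
  rewrite cardsU; apply: (leq_trans (leq_subr _ _)); apply: (leq_trans (leq_add out inn)); lia.
elim=> [|r IH] u /=.
  by rewrite cards1.
set B := ball S' r u.
have HN : #|[set v | [exists w in B, adj S' w v]]| <= #|B| * (2*k+1).
  have -> : [set v | [exists w in B, adj S' w v]] = \bigcup_(w in B) [set v | adj S' w v].
    apply/setP => v; rewrite in_set; apply/existsP/bigcupP.
      by case=> w /andP [wB a]; exists w => //; rewrite in_set.
    by case=> w wB; rewrite in_set => a; exists w; rewrite wB.
  rewrite -sum_nat_const.
  apply: (@leq_trans (\sum_(w in B) #|[set v | adj S' w v]|)); last by apply: leq_sum.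
  apply: (big_ind2 (fun (X : {set 'I_n}) m => #|X| <= m)) => //.
    by rewrite cards0.
  move=> X1 m1 X2 m2 h1 h2; rewrite cardsU; apply: (leq_trans (leq_subr _ _)); lia.
rewrite cardsU; apply: (leq_trans (leq_subr _ _)).
have := IH u; rewrite -/B expnS => h.
apply: (leq_trans (leq_add (leqnn #|B|) HN)).
have -> : #|B| + #|B| * (2*k+1) = (2*k+2) * #|B| by lia.
by rewrite leq_mul.
Qed.

Lemma path_ball (u y : 'I_n) : y \in ball (fun x => DBS k x) d u.
Proof.
have k0 : 0 < k by apply: ltnW.
have main : forall j, j <= d -> exists p : 'I_n,
    val p = (u * k ^ j + y %/ k ^ (d - j)) %% n /\ p \in ball (fun x => DBS k x) j u.
  elim=> [|j IH] jd.
    exists u; split; last by rewrite /= in_set1.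
    by rewrite expn0 muln1 subn0 -Hn divn_small // addn0 modn_small.
  have [p [Hp pb]] := IH (ltnW jd).
  set t := d - j.+1.
  have dj : d - j = t.+1 by rewrite /t; lia.
  have aa : (y %/ k ^ t) %% k < k by apply: ltn_pmod.
  pose q : 'I_n := Ordinal (ltn_pmod (u * k ^ j.+1 + y %/ k ^ t) n_gt0).
  exists q; split => //.
  have [->|ne] := eqVneq q p; first by rewrite /= in_setU pb.
  rewrite /= in_setU; apply/orP; right; rewrite in_set; apply/existsP; exists p.
  rewrite pb /= /adj; apply/orP; left; rewrite in_set ne andbT.
  apply/existsP; exists (Ordinal aa); rewrite /= Hp; apply/eqP; rewrite modE; congr (_ %% n).
  rewrite dj [k ^ t.+1]expnSr divnMA; set z := y %/ k ^ t.
  rewrite {1}(divn_eq z k) expnSr.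
  rewrite mulnDl mulnA; lia.
have [p [Hp pb]] := main d (leqnn d).
have -> : y = p.
  apply: val_inj; rewrite /= Hp subnn expn0 divn1 -Hn.
  by rewrite modnMDl modn_small.
exact: pb.
Qed.

End DB.

Lemma ball_mono n (S : profile n) r u : ball S r u \subset ball S r.+1 u.
Proof. by rewrite /= subsetUl. Qed.

Lemma ball_mono_le n (S : profile n) r r' u : r <= r' -> ball S r u \subset ball S r' u.
Proof.
move=> /subnK <-; elim: (r' - r) => [|m IH]; first by rewrite add0n.
by rewrite addSn; apply: (subset_trans IH); exact: ball_mono.
Qed.

Lemma dist_ge n (S : profile n) u v d :
  d <= n ^ 2 -> v \notin ball S d.-1 u -> d <= Defs.dist S u v.
Proof.
move=> dn nb; rewrite /Defs.dist.
apply: (big_ind (fun x => d <= x)) => //.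
  by move=> x y hx hy; rewrite leq_min hx hy.
move=> r vr; rewrite leqNgt; apply/negP => rd.
move/negP: nb; apply; apply: (subsetP (ball_mono_le S u _)) vr.
by case: d rd {dn} => //.
Qed.

Lemma dist_le n (S : profile n) u v r (rn : r < n) :
  v \in ball S r u -> Defs.dist S u v <= r.
Proof.
move=> vr; rewrite /Defs.dist.
have key : forall (s : seq 'I_n) (m : nat), Ordinal rn \in s ->
  \big[minn/m]_(i <- s | v \in ball S i u) (nat_of_ord i) <= r.
  elim=> [|x s IH] m //; rewrite in_cons big_cons => /orP [/eqP <-|xs].
    by rewrite vr geq_minl.
  case: ifP => _; last exact: IH.
  by rewrite geq_min IH ?orbT.
by apply: key; rewrite mem_index_enum.
Qed.

Lemma ball_connect n (S : profile n) r u v : v \in ball S r u -> connect (adj S) u v.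
Proof.
elim: r v => [|r IH] v /=.
  by rewrite in_set1 => /eqP ->.
rewrite in_setU => /orP [/IH //|]; rewrite in_set => /existsP [w /andP [wB a]].
by apply: connect_trans (IH _ wB) (connect1 a).
Qed.
Lemma aux X Y a c : X * c.+1 <= Y -> (a+1)*c <= a*c.+1 -> X*((a+1)*c) <= Y*a.
Proof.
move=> h1 h2.
rewrite -(leq_pmul2r (ltn0Sn c)).
apply: (@leq_trans (Y * ((a+1)*c))).
  by rewrite mulnAC leq_mul2r h1 orbT.
rewrite -mulnA leq_mul2l h2 orbT //.
Qed.

Lemma L1 a m : m <= a -> (a+1)^m * (a - m) <= a^(m+1).
Proof.
elim: m => [|m IH] ma; first by rewrite expn0 mul1n subn0 expn1.
have H := IH (ltnW ma).
have c : a - m = (a - m.+1).+1 by lia.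
rewrite c in H.
have h2 : (a+1)*(a - m.+1) <= a*(a - m.+1).+1 by lia.
have := aux H h2.
by rewrite expnS -mulnA -mulnCA (addn1 m.+1) expnSr -(addn1 m).
Qed.

Lemma L2 a m : 2 * m < a -> (a+1)^m < 2 * a^m.
Proof.
move=> h; have ma : m <= a by lia.
have := @L1 a m ma.
rewrite expnD expn1 => H.
have pos : 0 < a - m by lia.
rewrite -(ltn_pmul2r pos); apply: (leq_ltn_trans H).
have Zp : 0 < a ^ m by rewrite expn_gt0; lia.
set Z := a ^ m in Zp *.
nia.
Qed.

Lemma pow_bound e : (2 * 2^(e.+1) + 2)^e < 2^(e.+1 * e.+1).
Proof.
have he : 2 * e < 2^(e.+1) by rewrite expnS ltn_pmul2l // ltn_expl.
have := @L2 _ _ he; set a := 2^(e.+1) => h.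
have -> : 2 * a + 2 = 2 * (a + 1) by lia.
rewrite expnMn.
apply: (@leq_trans (2^e * (2 * a^e))); first by rewrite ltn_pmul2l // expn_gt0.
rewrite mulnA -expnSr /a -expnM -expnD.
by rewrite leq_eqVlt; apply/orP; left; apply/eqP; congr (2 ^ _); lia.
Qed.

Lemma INR_exp2 m : INR (2 ^ m)%N = pow (IZR 2) m.
Proof.
elim: m => [|m IH]; first by rewrite expn0.
by rewrite expnS mult_INR IH (INR_IZR_INZ 2).
Qed.

Lemma real_part d : INR d = sqrt (log2 (INR (2 ^ (d * d))%N)).
Proof.
rewrite INR_exp2 /log2 ln_pow; last by lra.
have h : ln (IZR 2) <> R0 by apply: ln_neq_0; lra.
rewrite mult_INR /Rdiv Rmult_assoc Rinv_r // Rmult_1_r sqrt_square //.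
exact: pos_INR.
Qed.

Theorem mainTheorem8 :
  forall N : nat, exists n : nat, (N <= n)%N /\
    exists (b : 'I_n -> nat),
      (forall i, (0 < b i)%N && (b i <= n - 1)%N) /\
      exists S : profile n,
        max_equilibrium b S /\
        INR (diameter S) = sqrt (log2 (INR n)).
Proof.
move=> e.
set d := e.+1; set k := 2 ^ d; set n := 2 ^ (d * d).
have Hn : n = k ^ d by rewrite /n /k -expnM.
have Hk : 1 < k by rewrite /k (leq_trans _ (leq_pexp2l _ (isT : 0 < d))) // expn1.
have Hd : 0 < d by [].
have ng0 := n_gt0 Hn Hk.
have dn : d < n.
  by rewrite /n (leq_trans (ltn_expl _ (isT : 1 < 2))) // leq_pexp2l // leq_pmulr.
exists n; split; first by apply: leq_trans (ltnW dn).
exists (fun x => #|DBS k x|); split.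
  move=> x; rewrite (DBS_card_gt0 Hn Hk Hd) /=.
  apply: (@leq_trans #|[set~ x]|); last by rewrite cardsC1 card_ord subn1.
  apply: subset_leq_card; apply/subsetP => y yS.
  rewrite in_setC1; apply/eqP => yx; move: yS; rewrite yx; apply/negP; exact: DBS_notin.
exists (fun x : 'I_n => DBS k x).
have dup : forall u v : 'I_n, Defs.dist (fun x : 'I_n => DBS k x) u v <= d.
  by move=> u v; exact: (dist_le dn (path_ball Hn Hk Hd u v)).
have dlow : forall (S' : profile n) (i : 'I_n), (forall v, v != i -> S' v = DBS k v) ->
    #|S' i| <= k -> exists v, d <= Defs.dist S' i v.
  move=> S' i HS Hi.
  have cb := ball_card Hn Hk Hd HS Hi e i.
  have lt : #|ball S' e i| < n.
    apply: leq_ltn_trans cb _; exact: pow_bound.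
  have [v vn] : exists v, v \notin ball S' e i.
    apply/existsP; rewrite -negb_forall; apply/negP => /forallP all.
    have : #|[set: 'I_n]| <= #|ball S' e i|.
      by apply: subset_leq_card; apply/subsetP => x _; apply: all.
    by rewrite cardsT card_ord leqNgt lt.
  exists v; apply: (dist_ge (d:=d)) => //.
  by rewrite (leq_trans (ltnW dn)) // expnS expn1 leq_pmulr.
have nc : ncomp (fun x : 'I_n => DBS k x) <= 1.
  rewrite /ncomp; apply: (@leq_trans #|[set (setT : {set 'I_n})]|); last by rewrite cards1.
  apply: subset_leq_card; apply/subsetP => X.
  case/imsetP => u _ ->; rewrite in_set1; apply/eqP/setP => v; rewrite !in_set.
  exact: (ball_connect (path_ball Hn Hk Hd u v)).
have cS : forall i, cMAX (fun x : 'I_n => DBS k x) i <= d.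
  move=> i; rewrite /cMAX.
  have -> : ncomp (fun x : 'I_n => DBS k x) - 1 = 0 by apply/eqP; rewrite subn_eq0.
  rewrite mul0n addn0; apply/bigmax_leqP => v _; exact: dup.
split.
  split; first by move=> i; split => //; exact: DBS_notin.
  move=> i S' HS [_ Hc].
  have Hc' : #|S' i| <= k by rewrite Hc; exact: (DBS_card_le Hn Hk).
  have [v hv] := dlow S' i (fun v hv => HS v hv) Hc'.
  apply: leq_trans (cS i) _; rewrite /cMAX.
  apply: (leq_trans hv); apply: (leq_trans _ (leq_addr _ _)).
  exact: leq_bigmax.
have -> : diameter (fun x : 'I_n => DBS k x) = d.
  apply/eqP; rewrite eqn_leq; apply/andP; split.
    by apply/bigmax_leqP => u _; apply/bigmax_leqP => v _; exact: dup.
  pose u0 : 'I_n := Ordinal ng0.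
  have [v hv] := dlow (fun x : 'I_n => DBS k x) u0 (fun _ _ => erefl) (DBS_card_le Hn Hk u0).
  apply: (leq_trans hv); apply: (@leq_trans (\max_v0 Defs.dist (fun x : 'I_n => DBS k x) u0 v0)).
    exact: leq_bigmax.
  rewrite /diameter; exact: (leq_bigmax u0).
exact: real_part.
Qed.
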